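(* All the symmetries $\chi_{2k+1}$, $k = 0, 1, \dots$, are local.
   Context: Consider the Calogero--Bogoyavlenskii--Schiff breaking soliton equation $u_{tx} = 2u_y u_{xx} + 4u_x u_{xy} - u_{xxxy}$. For $\mu=0$, the recursion operator $\Psi = \mathcal{R}_0(\Phi)$ for symmetries of this equation is defined by the system $\Psi_x = 4u_x\Phi_x + 2u_{xx}\Phi - \Phi_{xxx}$, $\Psi_y = \Phi_t - 2u_y\Phi_x + 2u_{xy}\Phi$ (so a priori its action may produce nonlocal objects). Define $\chi_1 := u_x$ and the symmetries $\chi_{2k+3}$ by the iterated action $\mathcal{R}_0(\chi_{2k+1}) = -\chi_{2k+3}$, $k\ge 0$; e.g. $\chi_3 = u_{xxx} - 3u_x^2$, $\chi_5 = u_{5x} - 5(2u_x(u_{xxx}-u_x^2) + u_{xx}^2)$. Since the equation is Lagrangian (with Lagrangian density $\frac12(m u_x^2u_y - u_xu_t + s u_{xx}u_{xy})$ in the appropriate parameter case), its symmetries are simultaneously cosymmetries, and there is an algorithm (Bogoyavlenskii) generating conservation laws associated to the cosymmetries $\chi_{2k+1}$. ''Local'' means depending only on $t,x,y,u$ and finitely many derivatives of $u$, with no nonlocal variables. *)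

(* Defs.v *)
From mathcomp Require Import all_boot all_order all_algebra.
Set Implicit Arguments. Unset Strict Implicit. Unset Printing Implicit Defensive.
Import GRing.Theory.
Local Open Scope ring_scope.

(* Syntax of differential polynomials.
   [U a b c] is the jet coordinate  d_x^a d_y^b d_t^c u. *)
Inductive dpoly : Type :=
| U   : nat -> nat -> nat -> dpoly
| Cst : rat -> dpoly
| Add : dpoly -> dpoly -> dpoly
| Mul : dpoly -> dpoly -> dpoly
| Neg : dpoly -> dpoly.

Fixpoint eval (s : nat -> nat -> nat -> rat) (p : dpoly) : rat :=
  match p with
  | U a b c => s a b c
  | Cst q => q
  | Add p q => eval s p + eval s q
  | Mul p q => eval s p * eval s q
  | Neg p => - eval s p
  end.

Fixpoint Dtot (sh : nat -> nat -> nat -> dpoly) (p : dpoly) : dpoly :=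
  match p with
  | U a b c => sh a b c
  | Cst _ => Cst 0
  | Add p q => Add (Dtot sh p) (Dtot sh q)
  | Mul p q => Add (Mul (Dtot sh p) q) (Mul p (Dtot sh q))
  | Neg p => Neg (Dtot sh p)
  end.

Definition Dx := Dtot (fun a b c => U a.+1 b c).
Definition Dy := Dtot (fun a b c => U a b.+1 c).
Definition Dt := Dtot (fun a b c => U a b c.+1).

Definition Dmulti (a b c : nat) (p : dpoly) : dpoly :=
  iter a Dx (iter b Dy (iter c Dt p)).

Definition Sub p q := Add p (Neg q).
Definition rc (n : nat) : dpoly := Cst n%:R.

Definition CBS : dpoly :=
  Add (Sub (Sub (U 1 0 1) (Mul (rc 2) (Mul (U 0 1 0) (U 2 0 0))))
           (Mul (rc 4) (Mul (U 1 0 0) (U 1 1 0))))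
      (U 3 1 0).

(* p lies in the differential ideal generated by CBS:
   p = sum_i c_i * D_x^{a_i} D_y^{b_i} D_t^{c_i} CBS  as polynomials
   (polynomial identity over the infinite field Q = identity of values at all jet points). *)
Definition in_CBS_ideal (p : dpoly) : Prop :=
  exists r : seq (nat * nat * nat * dpoly),
    forall s, eval s p =
      \sum_(z <- r) eval s z.2 * eval s (Dmulti z.1.1.1 z.1.1.2 z.1.2 CBS).

(* Equality on (the infinite prolongation of) the equation. *)
Definition eq_on_CBS (p q : dpoly) : Prop := in_CBS_ideal (Sub p q).

Definition is_R0_image (Phi Psi : dpoly) : Prop :=
  eq_on_CBS (Dx Psi)
    (Sub (Add (Mul (rc 4) (Mul (U 1 0 0) (Dx Phi)))
              (Mul (rc 2) (Mul (U 2 0 0) Phi)))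
         (Dx (Dx (Dx Phi))))
  /\
  eq_on_CBS (Dy Psi)
    (Add (Sub (Dt Phi) (Mul (rc 2) (Mul (U 0 1 0) (Dx Phi))))
         (Mul (rc 2) (Mul (U 1 1 0) Phi))).

(* Main.v *)
Require Import Defs.
From mathcomp Require Import all_boot all_order all_algebra.
From mathcomp Require Import ring lra.
Set Implicit Arguments. Unset Strict Implicit. Unset Printing Implicit Defensive.
Import GRing.Theory Num.Theory.
Local Open Scope ring_scope.
Local Notation Sub := Defs.Sub.

Definition jet := nat -> nat -> nat -> rat.
Definition peq p q := forall s : jet, eval s p = eval s q.

Lemma iterDx_Add n p q : iter n Dx (Add p q) = Add (iter n Dx p) (iter n Dx q).
Proof. by elim: n => //= n ->. Qed.
Lemma iterDx_Neg n p : iter n Dx (Neg p) = Neg (iter n Dx p).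
Proof. by elim: n => //= n ->. Qed.
Lemma iterDx_U n a b c : iter n Dx (U a b c) = U (n + a) b c.
Proof. by elim: n => //= n ->. Qed.

Lemma I_ext p q : peq p q -> in_CBS_ideal p -> in_CBS_ideal q.
Proof. move=> e [r Hr]; exists r => s; by rewrite -e. Qed.
Lemma I_zero p : (forall s, eval s p = 0) -> in_CBS_ideal p.
Proof. move=> e; exists [::] => s; by rewrite big_nil e. Qed.
Lemma I_add p q : in_CBS_ideal p -> in_CBS_ideal q -> in_CBS_ideal (Add p q).
Proof. move=> [r1 H1] [r2 H2]; exists (r1 ++ r2) => s /=; by rewrite big_cat /= H1 H2. Qed.
Lemma I_mul q p : in_CBS_ideal p -> in_CBS_ideal (Mul q p).
Proof.
move=> [r H]; exists [seq (z.1, Mul q z.2) | z <- r] => s /=.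
rewrite big_map H mulr_sumr; apply eq_bigr => z _ /=; by rewrite mulrA.
Qed.
Lemma I_neg p : in_CBS_ideal p -> in_CBS_ideal (Neg p).
Proof. move=> H; apply: (I_ext _ (I_mul (Cst (-1)) H)) => s /=; ring. Qed.
Lemma I_gen a : in_CBS_ideal (iter a Dx CBS).
Proof. exists [:: (a,0,0, Cst 1)]%N => s; by rewrite big_seq1 /= mul1r. Qed.

Fixpoint evalP (s d : jet) (p : dpoly) : {poly rat} :=
  match p with
  | U a b c => (s a b c)%:P + (d a b c)%:P * 'X
  | Cst q => q%:P
  | Add p q => evalP s d p + evalP s d q
  | Mul p q => evalP s d p * evalP s d q
  | Neg p => - evalP s d p
  end.
Lemma evalP_horner s d p e : (evalP s d p).[e] = eval (fun a b c => s a b c + d a b c * e) p.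
Proof. elim: p => [a b c|q|p IHp q IHq|p IHp q IHq|p IHp] /=; rewrite ?hornerE ?IHp ?IHq //. Qed.

Lemma evalP_coef s sh p :
  (evalP s (fun a b c => eval s (sh a b c)) p)`_0 = eval s p /\
  (evalP s (fun a b c => eval s (sh a b c)) p)`_1 = eval s (Dtot sh p).
Proof.
elim: p => [a b c|q|p [H0 H1] q [K0 K1]|p [H0 H1] q [K0 K1]|p [H0 H1]] /=.
- rewrite !coefD !coefC !coefCM !coefX /=; split; ring.
- by rewrite !coefC.
- by rewrite !coefD H0 H1 K0 K1.
- rewrite coef0M H0 K0; split=>//.
  rewrite coefM big_ord_recr big_ord_recr big_ord0 /= add0r H0 H1 K0 K1; ring.
- by rewrite !coefN H0 H1.
Qed.

Lemma poly_all_zero (P : {poly rat}) : (forall e, P.[e] = 0) -> P = 0.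
Proof.
move=> H; apply/eqP; apply/negPn/negP => nz.
have : (size [seq (i%:R : rat) | i <- iota 0 (size P)] < size P)%N.
  apply: max_poly_roots => //.
    apply/allP => x /mapP [i _ ->]; apply/rootP; exact: H.
  rewrite map_inj_uniq ?iota_uniq // => i j /eqP; rewrite eqr_nat => /eqP //.
by rewrite size_map size_iota ltnn.
Qed.

Lemma Dtot_cong sh p : (forall s, eval s p = 0) -> forall s, eval s (Dtot sh p) = 0.
Proof.
move=> H s; have [_ <-] := evalP_coef s sh p.
have -> : evalP s (fun a b c => eval s (sh a b c)) p = 0.
  by apply poly_all_zero => e; rewrite evalP_horner H.
by rewrite coef0.
Qed.
Fixpoint okp (p : dpoly) : bool :=
  match p with U a _ _ => (0 < a)%N | Cst _ => true
  | Add p q => okp p && okp q | Mul p q => okp p && okp q | Neg p => okp p end.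
Lemma okp_Dx p : okp p -> okp (Dx p).
Proof.
elim: p => [a b c|q|p IHp q IHq|p IHp q IHq|p IHp] //=.
- by case/andP => /IHp -> /IHq ->.
- by case/andP => H1 H2; rewrite H1 H2 IHp // IHq.
Qed.

Lemma comm_Dx sh p : (forall a b c, (0 < a)%N -> peq (Dx (sh a b c)) (sh a.+1 b c)) ->
  okp p -> peq (Dtot sh (Dx p)) (Dx (Dtot sh p)).
Proof.
move=> Hsh; elim: p => [a b c|q|p IHp q IHq|p IHp q IHq|p IHp] /= Hok s.
- by rewrite Hsh.
- by [].
- by case/andP: Hok => /IHp H1 /IHq H2; rewrite /= H1 H2.
- case/andP: Hok => /IHp H1 /IHq H2; rewrite /= H1 H2; ring.
- by rewrite /= IHp.
Qed.

Lemma peq_Dx p q : peq p q -> peq (Dx p) (Dx q).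
Proof.
move=> H s; apply/eqP; rewrite -subr_eq0; apply/eqP.
have := Dtot_cong (fun a b c => U a.+1 b c) (p := Sub p q).
by apply => // s'; rewrite /= H subrr.
Qed.

Definition Ap := Mul (rc 2) (Mul (U 0 1 0) (U 2 0 0)).
Definition Bp := Mul (rc 4) (Mul (U 1 0 0) (U 1 1 0)).
Definition Np := Sub (Add Ap Bp) (U 3 1 0).
Definition shd (a b c : nat) : dpoly :=
  match a, b, c with a'.+1, 0, 0 => iter a' Dx Np | _, _, _ => U a b c.+1 end.
Definition Dd := Dtot shd.

Lemma shd_ok a b c : (0 < a)%N -> peq (Dx (shd a b c)) (shd a.+1 b c).
Proof. by case: a => // a _; case: b => [|b]; case: c => [|c] // s. Qed.

Lemma Dt_Dd p : in_CBS_ideal (Sub (Dt p) (Dd p)).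
Proof.
elim: p => [a b c|q|p IHp q IHq|p IHp q IHq|p IHp].
- case: a => [|a]; first by apply: I_zero => s /=; rewrite subrr.
  case: b => [|b]; last by apply: I_zero => s /=; rewrite subrr.
  case: c => [|c]; last by apply: I_zero => s /=; rewrite subrr.
  apply: (I_ext _ (I_gen a)) => s.
  rewrite /CBS /Dd /= /Np /Defs.Sub !iterDx_Add !iterDx_Neg !iterDx_U /= addn1.
  ring.
- by apply: I_zero => s /=; rewrite subrr.
- apply: (I_ext _ (I_add IHp IHq)) => s /=; ring.
- apply: (I_ext _ (I_add (I_mul q IHp) (I_mul p IHq))) => s /=; ring.
- apply: (I_ext _ (I_neg IHp)) => s /=; ring.
Qed.

Definition vv := U 1 0 0.
Definition dsum (l : seq dpoly) := foldr Add (Cst 0) l.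
Lemma eval_dsum s l : eval s (dsum l) = \sum_(x <- l) eval s x.
Proof. elim: l => [|x l IH]; by rewrite ?big_nil ?big_cons //= IH. Qed.
Lemma Dtot_dsum sh l : Dtot sh (dsum l) = dsum (map (Dtot sh) l).
Proof. by elim: l => //= x l ->. Qed.
Lemma okp_dsum l : all okp l -> okp (dsum l).
Proof. by elim: l => //= x l IH /andP[-> /IH]. Qed.

Lemma okp_dsum_map (f : nat -> dpoly) l : (forall i, i \in l -> okp (f i)) -> okp (dsum (map f l)).
Proof.
elim: l => //= x l IH H; rewrite H ?mem_head // IH // => i Hi; apply: H.
by rewrite in_cons Hi orbT.
Qed.

Definition dsumf (f : nat -> dpoly) n := locked (dsum (map f (iota 0 n))).
Lemma eval_dsumf s f n : eval s (dsumf f n) = \sum_(i < n) eval s (f i).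
Proof. by rewrite /dsumf -lock eval_dsum big_map -{1}(subn0 n) -/(index_iota 0 n) big_mkord. Qed.
Lemma Dtot_dsumf sh f n : Dtot sh (dsumf f n) = dsumf (fun i => Dtot sh (f i)) n.
Proof. by rewrite /dsumf -!lock Dtot_dsum -map_comp. Qed.

Definition Tm (R : nat -> dpoly) k i :=
  Sub (Sub (Mul (Cst 2) (Mul (R i) (Dx (Dx (R (k-i)%N)))))
           (Mul (Dx (R i)) (Dx (R (k-i)%N))))
      (Mul (Cst 4) (Mul vv (Mul (R i) (R (k-i)%N)))).
Definition Sk (R : nat -> dpoly) k :=
  Sub (dsumf (Tm R k) k.+1)
      (Mul (Cst 4) (dsumf (fun i => Mul (R i.+1) (R (k-i)%N)) k)).
Fixpoint Rf n : nat -> dpoly :=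
  match n with
  | 0 => fun _ => Cst 1
  | n'.+1 => fun i => if (i <= n')%N then Rf n' i else Mul (Cst (1/8)) (Sk (Rf n') n')
  end.
Definition R n := Rf n n.

Lemma Rf_R n i : (i <= n)%N -> Rf n i = R i.
Proof.
elim: n i => [|n IH] i; first by rewrite leqn0 => /eqP ->.
rewrite leq_eqVlt => /orP[/eqP -> //|]; rewrite ltnS => Hi /=.
by rewrite Hi IH.
Qed.
Lemma R0 : R 0 = Cst 1. Proof. by []. Qed.
Lemma Sk_ext (F G : nat -> dpoly) k : (forall i, (i <= k)%N -> F i = G i) -> Sk F k = Sk G k.
Proof.
move=> H; rewrite /Sk /Tm /dsumf -!lock; congr (Defs.Sub (dsum _) (Mul _ (dsum _))); apply/eq_in_map => i;
  rewrite mem_iota add0n => /andP[_ Hi].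
- by rewrite !H ?leq_subr // -ltnS.
- by rewrite !H ?leq_subr.
Qed.
Lemma RS k : R k.+1 = Mul (Cst (1/8)) (Sk R k).
Proof. rewrite /R /= ltnn; congr Mul; apply: Sk_ext => i Hi; exact: Rf_R. Qed.

Lemma okp_R n : okp (R n).
Proof.
elim/ltn_ind: n => [[|k] IH] //; rewrite RS.
rewrite (_ : okp (Mul _ _) = okp (Sk R k)) //.
rewrite /Sk /dsumf -!lock (_ : okp (Defs.Sub _ _) = okp (dsum [seq Tm R k i | i <- iota 0 k.+1]) &&
   okp (dsum [seq Mul (R i.+1) (R (k-i)) | i <- iota 0 k])) //.
apply/andP; split.
- apply: okp_dsum_map => i; rewrite mem_iota add0n => /andP[_ Hi].
  have H1 := IH i Hi; have H2 : okp (R (k - i)) by apply: IH; rewrite ltnS leq_subr.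
  by rewrite /Tm /= H1 H2 !okp_Dx.
- apply: okp_dsum_map => i; rewrite mem_iota add0n => /andP[_ Hi].
  by rewrite /= !IH // ltnS ?leq_subr.
Qed.

Arguments dsumf : simpl never.
Arguments R : simpl never.

Definition conv (f g : nat -> rat) k := \sum_(i < k.+1) f i * g (k - i)%N.
Definition shs (f g : nat -> rat) k := \sum_(i < k) f i.+1 * g (k - i)%N.

Lemma conv_sym f g k : conv f g k = conv g f k.
Proof.
rewrite /conv (reindex_inj rev_ord_inj) /=; apply: eq_bigr => i _.
by rewrite subSS subKn 1?mulrC // -ltnS.
Qed.
Lemma shs_sym f g k : shs f g k = shs g f k.
Proof.
rewrite /shs (reindex_inj rev_ord_inj) /=; apply: eq_bigr => i _.
by rewrite subnSK // subKn 1?mulrC.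
Qed.
Lemma conv_S f g k : conv f g k.+1 = f 0%N * g k.+1 + shs f g k + f k.+1 * g 0%N.
Proof.
rewrite /conv /shs big_ord_recl big_ord_recr /= subn0 subnn addrA; congr (_ + _ + _).
Qed.

Definition Bf (r r1 r2 : nat -> rat) (v : rat) (x x1 x2 : nat -> rat) k :=
  2 * conv x r2 k + 2 * conv r x2 k - 2 * conv r1 x1 k - 8 * v * conv r x k - 8 * conv r x k.+1.

Lemma numG (r r1 r2 d d1 d2 : nat -> rat) (v Dv : rat) k :
  r 0%N = 1 -> d 0%N = 0 ->
  8 * d k.+1 = 2 * conv d r2 k + 2 * conv r d2 k - conv d1 r1 k - conv r1 d1 k
     - 4 * Dv * conv r r k - 4 * v * conv d r k - 4 * v * conv r d k
     - 4 * (shs d r k + shs r d k) ->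
  Bf r r1 r2 v d d1 d2 k = 4 * Dv * conv r r k.
Proof.
move=> r0 d0 H; rewrite /Bf conv_S r0 d0 mul1r mulr0 addr0.
rewrite (conv_sym d1 r1) (conv_sym d r) (shs_sym d r) in H.
lra.
Qed.

Lemma eval_Mul s p q : eval s (Mul p q) = eval s p * eval s q. Proof. by []. Qed.
Lemma eval_Add s p q : eval s (Add p q) = eval s p + eval s q. Proof. by []. Qed.
Lemma eval_Neg s p : eval s (Neg p) = - eval s p. Proof. by []. Qed.
Lemma eval_Cst s c : eval s (Cst c) = c. Proof. by []. Qed.
Lemma Dtot_Mul sh p q : Dtot sh (Mul p q) = Add (Mul (Dtot sh p) q) (Mul p (Dtot sh q)). Proof. by []. Qed.
Lemma Dtot_Add sh p q : Dtot sh (Add p q) = Add (Dtot sh p) (Dtot sh q). Proof. by []. Qed.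
Lemma Dtot_Neg sh p : Dtot sh (Neg p) = Neg (Dtot sh p). Proof. by []. Qed.
Lemma Dtot_Cst sh c : Dtot sh (Cst c) = Cst 0. Proof. by []. Qed.

Definition rr (s : jet) n i := eval s (iter n Dx (R i)).
Definition dd sh (s : jet) n i := eval s (iter n Dx (Dtot sh (R i))).

Definition goodsh (sh : nat -> nat -> nat -> dpoly) := forall a b c, (0 < a)%N -> peq (Dx (sh a b c)) (sh a.+1 b c).

Lemma comm1 sh i : goodsh sh -> peq (Dtot sh (Dx (R i))) (Dx (Dtot sh (R i))).
Proof. move=> H; apply: comm_Dx => //; exact: okp_R. Qed.
Lemma comm2 sh i : goodsh sh -> peq (Dtot sh (Dx (Dx (R i)))) (Dx (Dx (Dtot sh (R i)))).
Proof.
move=> H s; rewrite comm_Dx //; last by apply: okp_Dx; exact: okp_R.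
by apply: peq_Dx; exact: comm1.
Qed.

Lemma structG sh s k : goodsh sh ->
  let r := rr s 0 in let r1 := rr s 1 in let r2 := rr s 2 in
  let d := dd sh s 0 in let d1 := dd sh s 1 in let d2 := dd sh s 2 in
  8 * d k.+1 = 2 * conv d r2 k + 2 * conv r d2 k - conv d1 r1 k - conv r1 d1 k
     - 4 * eval s (sh 1 0 0)%N * conv r r k - 4 * s 1 0 0 * conv d r k - 4 * s 1 0 0 * conv r d k
     - 4 * (shs d r k + shs r d k).
Proof.
move=> Hsh r r1 r2 d d1 d2.
have EA : \sum_(i < k.+1) eval s (Dtot sh (Tm R k i)) =
   2 * conv d r2 k + 2 * conv r d2 k - conv d1 r1 k - conv r1 d1 k
     - 4 * eval s (sh 1 0 0)%N * conv r r k - 4 * s 1 0 0 * conv d r k - 4 * s 1 0 0 * conv r d k.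
  rewrite /conv !mulr_sumr -!sumrN -!big_split; apply: eq_bigr => i _.
  rewrite /d /d1 /d2 /r /r1 /r2 /dd /rr /Tm /= !comm2 // !comm1 //; ring.
have EB : \sum_(i < k) eval s (Dtot sh (Mul (R i.+1) (R (k - i)%N))) = shs d r k + shs r d k.
  rewrite /shs -big_split; apply: eq_bigr => i _.
  by rewrite /d /r /dd /rr /=.
rewrite /d /dd /= RS Dtot_Mul /Sk /Defs.Sub !Dtot_Add !Dtot_Neg !Dtot_Mul !Dtot_Cst !Dtot_dsumf.
rewrite !(eval_Add, eval_Neg, eval_Mul, eval_Cst, eval_dsumf) EA EB; field; by [].
Qed.

Lemma conv_Sr f g k : conv f g k.+1 = conv f (fun j => g j.+1) k + f k.+1 * g 0%N.
Proof.
rewrite /conv big_ord_recr /= subnn; congr (_ + _); apply: eq_bigr => i _.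
by rewrite subSn // -ltnS.
Qed.

Lemma GB sh s k : goodsh sh ->
  Bf (rr s 0) (rr s 1) (rr s 2) (s 1 0 0)%N (dd sh s 0) (dd sh s 1) (dd sh s 2) k
  = 4 * eval s (sh 1 0 0)%N * conv (rr s 0) (rr s 0) k.
Proof.
move=> H; apply: numG; [by rewrite /rr /= ?R0 | by rewrite /dd /= ?R0 | exact: structG].
Qed.

Definition shx (a b c : nat) := U a.+1 b c.
Lemma goodshx : goodsh shx. Proof. by move=> a b c _ s. Qed.

Lemma numL (r r1 r2 r3 : nat -> rat) v v1 k : r1 0%N = 0 ->
  Bf r r1 r2 v r1 r2 r3 k = 4 * v1 * conv r r k ->
  conv r (fun j => r3 j - 4 * v * r1 j - 2 * v1 * r j - 4 * r1 j.+1) k = 0.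
Proof.
move=> r10 H.
have E : conv r (fun j => r3 j - 4 * v * r1 j - 2 * v1 * r j - 4 * r1 j.+1) k =
  conv r r3 k - 4 * v * conv r r1 k - 2 * v1 * conv r r k - 4 * conv r (fun j => r1 j.+1) k.
  rewrite /conv !mulr_sumr -!sumrN -!big_split; apply: eq_bigr => i _ /=; ring.
move: H; rewrite E /Bf conv_Sr r10 mulr0 addr0 => H.
lra.
Qed.

Lemma numInd (r m : nat -> rat) : r 0%N = 1 -> (forall k, conv r m k = 0) -> forall k, m k = 0.
Proof.
move=> r0 H; elim/ltn_ind => k IH.
have := H k; rewrite /conv big_ord_recl /= r0 mul1r subn0 big1 ?addr0 // => i _.
rewrite IH ?mulr0 // /bump /= add1n.
case: k IH {H} i => [|k] IH [i Hi] //=.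
by rewrite subSS ltnS leq_subr.
Qed.

Lemma lenard s j : rr s 3 j = 4 * s 1 0 0 * rr s 1 j + 2 * s 2 0 0 * rr s 0 j + 4 * rr s 1 j.+1.
Proof.
have H k : conv (rr s 0) (fun j => rr s 3 j - 4 * s 1 0 0 * rr s 1 j - 2 * s 2 0 0 * rr s 0 j - 4 * rr s 1 j.+1) k = 0.
  apply: numL; first by rewrite /rr /= ?R0.
  exact: (GB s k goodshx).
have r0 : rr s 0 0 = 1 by rewrite /rr /= ?R0.
have := numInd r0 H j.
move=> E; lra.
Qed.

Lemma numE (r r1 r2 r3 : nat -> rat) v v1 w w1 w2 w3 k :
  r1 0%N = 0 ->
  (forall j, r3 j = 4 * v * r1 j + 2 * v1 * r j + 4 * r1 j.+1) ->
  Bf r r1 r2 v (fun j => 2 * w1 * r j - 2 * w * r1 j) (fun j => 2 * w2 * r j - 2 * w * r2 j)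
     (fun j => 2 * (w3 * r j + w2 * r1 j - w1 * r2 j - w * r3 j)) k
  = 4 * (w3 - 4 * v * w1 - 2 * v1 * w) * conv r r k - 16 * w1 * conv r r k.+1.
Proof.
move=> r10 L.
have E1 : conv (fun j => 2 * w1 * r j - 2 * w * r1 j) r2 k = 2 * w1 * conv r r2 k - 2 * w * conv r1 r2 k.
  rewrite /conv !mulr_sumr -!sumrN -!big_split;apply: eq_bigr => i _ /=; ring.
have E2 : conv r (fun j => 2 * (w3 * r j + w2 * r1 j - w1 * r2 j - w * r3 j)) k =
   2 * w3 * conv r r k + 2 * w2 * conv r r1 k - 2 * w1 * conv r r2 k
   - 8 * w * v * conv r r1 k - 4 * w * v1 * conv r r k - 8 * w * conv r (fun j => r1 j.+1) k.
  rewrite /conv !mulr_sumr -!sumrN -!big_split; apply: eq_bigr => i _ /=; rewrite L; ring.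
have E3 : conv r1 (fun j => 2 * w2 * r j - 2 * w * r2 j) k = 2 * w2 * conv r r1 k - 2 * w * conv r1 r2 k.
  rewrite (conv_sym r r1) /conv !mulr_sumr -!sumrN -!big_split; apply: eq_bigr => i _ /=; ring.
have E4 : forall k', conv r (fun j => 2 * w1 * r j - 2 * w * r1 j) k' = 2 * w1 * conv r r k' - 2 * w * conv r r1 k'.
  move=> k'; rewrite /conv !mulr_sumr -!sumrN -!big_split; apply: eq_bigr => i _ /=; ring.
rewrite /Bf E1 E2 E3 !E4 (conv_Sr r r1) r10 mulr0 addr0.
ring.
Qed.

Lemma Bf_shift (r r1 r2 : nat -> rat) v (Y Y1 Y2 : nat -> rat) k :
  Y 0%N = 0 -> Y1 0%N = 0 -> Y2 0%N = 0 ->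
  Bf r r1 r2 v Y Y1 Y2 k.+1 = Bf r r1 r2 v (fun j => Y j.+1) (fun j => Y1 j.+1) (fun j => Y2 j.+1) k.
Proof.
move=> Y0 Y10 Y20.
rewrite /Bf (conv_sym Y) (conv_sym (fun j => Y j.+1)) (conv_Sr r2 Y k) (conv_Sr r Y2 k)
  (conv_Sr r1 Y1 k) (conv_Sr r Y k) (conv_Sr r Y k.+1) Y0 Y10 Y20 !mulr0 !addr0 //.
Qed.

Lemma conv_lin_r (f x a b c : nat -> rat) al k :
  (forall j, x j = al * a j + b j + c j) -> conv f x k = al * conv f a k + conv f b k + conv f c k.
Proof. move=> H; rewrite /conv mulr_sumr -!big_split; apply: eq_bigr => i _ /=; rewrite H; ring. Qed.
Lemma conv_lin_l (f x a b c : nat -> rat) al k :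
  (forall j, x j = al * a j + b j + c j) -> conv x f k = al * conv a f k + conv b f k + conv c f k.
Proof. move=> H; rewrite /conv mulr_sumr -!big_split; apply: eq_bigr => i _ /=; rewrite H; ring. Qed.

Lemma Bf_lin (r r1 r2 : nat -> rat) v (x x1 x2 a a1 a2 b b1 b2 c c1 c2 : nat -> rat) al k :
  (forall j, x j = al * a j + b j + c j) ->
  (forall j, x1 j = al * a1 j + b1 j + c1 j) ->
  (forall j, x2 j = al * a2 j + b2 j + c2 j) ->
  Bf r r1 r2 v x x1 x2 k = al * Bf r r1 r2 v a a1 a2 k + Bf r r1 r2 v b b1 b2 k + Bf r r1 r2 v c c1 c2 k.
Proof.
move=> Hx Hx1 Hx2.
rewrite /Bf (conv_lin_l r2 k Hx) (conv_lin_r r k Hx2) (conv_lin_r r1 k Hx1) (conv_lin_r r k Hx)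
  (conv_lin_r r k.+1 Hx); ring.
Qed.

Lemma numU (r r1 r2 : nat -> rat) v (z z1 z2 : nat -> rat) k :
  r 0%N = 1 -> (forall j, (j <= k)%N -> [/\ z j = 0, z1 j = 0 & z2 j = 0]) ->
  Bf r r1 r2 v z z1 z2 k = 0 -> z k.+1 = 0.
Proof.
move=> r0 H; rewrite /Bf conv_S r0 mul1r.
have Z : forall f g, (forall j, (j <= k)%N -> g j = 0) -> conv f g k = 0.
  by move=> f g Hg; rewrite /conv big1 // => i _; rewrite Hg ?mulr0 // leq_subr.
have Zl : forall f g, (forall j, (j <= k)%N -> g j = 0) -> conv g f k = 0.
  by move=> f g Hg; rewrite conv_sym Z.
have Zs : shs r z k = 0.
  by rewrite /shs big1 // => i _; case: (H _ (leq_subr i k)) => -> _ _; rewrite mulr0.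
have z0 : z 0%N = 0 by case: (H 0%N (leq0n k)).
rewrite Zs z0 (Zl r2 z) ?(Z r z2) ?(Z r1 z1) ?(Z r z) //; try by move=> j /H[].
move=> E; lra.
Qed.

Definition shy (a b c : nat) := U a b.+1 c.
Lemma goodshy : goodsh shy. Proof. by move=> a b c _ s. Qed.
Lemma goodshd : goodsh shd. Proof. exact: shd_ok. Qed.

Definition Ep j := Defs.Sub (Mul (Cst 2) (Mul (U 1 1 0) (R j))) (Mul (Cst 2) (Mul (U 0 1 0) (Dx (R j)))).
Definition Zp j := Add (Add (Mul (Cst 4) (Dtot shy (R j.+1))) (Dd (R j))) (Ep j).
Definition zz s n j := eval s (iter n Dx (Zp j)).

Lemma zz0 s j : zz s 0 j = 4 * dd shy s 0 j.+1 + dd shd s 0 j +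
   (2 * s 1 1 0 * rr s 0 j - 2 * s 0 1 0 * rr s 1 j).
Proof. rewrite /zz /dd /rr /=; ring. Qed.
Lemma zz1 s j : zz s 1 j = 4 * dd shy s 1 j.+1 + dd shd s 1 j +
   (2 * s 2 1 0 * rr s 0 j - 2 * s 0 1 0 * rr s 2 j).
Proof. rewrite /zz /dd /rr /=; ring. Qed.
Lemma zz2 s j : zz s 2 j = 4 * dd shy s 2 j.+1 + dd shd s 2 j +
   (2 * (s 3 1 0 * rr s 0 j + s 2 1 0 * rr s 1 j - s 1 1 0 * rr s 2 j - s 0 1 0 * rr s 3 j)).
Proof. rewrite /zz /dd /rr /=; ring. Qed.

Lemma dd_0 sh s n : (n <= 2)%N -> dd sh s n 0 = 0.
Proof. by case: n => [|[|[|]]] // _; rewrite /dd /= ?R0. Qed.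
Lemma rr_0 s : rr s 0 0 = 1 /\ rr s 1 0 = 0.
Proof. by rewrite /rr /= ?R0. Qed.

Lemma zz_zero j : forall s, zz s 0 j = 0.
Proof.
elim/ltn_ind: j => j IH s.
case: j IH => [|k] IH.
- have G := structG s 0 goodshy; cbv zeta in G.
  move: G; rewrite /conv /shs !big_ord_recl !big_ord0 /= !subnn !dd_0 // (proj1 (rr_0 s)) => G.
  rewrite zz0 dd_0 // (proj1 (rr_0 s)) (proj2 (rr_0 s)).
  rewrite /shy /= in G; lra.
- have Z1 : forall m, (m <= k)%N -> forall s, zz s 1 m = 0.
    move=> m Hm s'; rewrite /zz; apply: (Dtot_cong (fun a b c => U a.+1 b c) (p := Zp m)) => s''.
    exact: (IH m Hm s'').
  have Z2 : forall m, (m <= k)%N -> forall s, zz s 2 m = 0.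
    move=> m Hm s'; rewrite /zz; apply: (Dtot_cong (fun a b c => U a.+1 b c) (p := Dx (Zp m))) => s''.
    exact: (Z1 m Hm s'').
  apply: (numU (r1 := rr s 1) (r2 := rr s 2) (v := s 1 0 0) (z1 := zz s 1) (z2 := zz s 2)).
  + exact: (proj1 (rr_0 s)).
  + by move=> m Hm; split; [apply: IH | apply: Z1 | apply: Z2].
  rewrite (Bf_lin (rr s 0) (rr s 1) (rr s 2) (s 1 0 0) k (zz0 s) (zz1 s) (zz2 s)).
  rewrite -(Bf_shift (rr s 0) (rr s 1) (rr s 2) (s 1 0 0) k (dd_0 shy s _) (dd_0 shy s _) (dd_0 shy s _)) //.
  rewrite GB ?goodshy // GB ?goodshd //.
  rewrite (@numE (rr s 0) (rr s 1) (rr s 2) (rr s 3) (s 1 0 0) (s 2 0 0) _ _ _ _ k (proj2 (rr_0 s)) (lenard s)).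
  rewrite /shy /shd /=; ring.
  exact: goodshd.
Qed.

Opaque R.

Definition chi' k := Mul (Cst (-2 * 4 ^+ k)) (R k.+1).

Lemma chi'_R0 k : is_R0_image (chi' k) (Neg (chi' k.+1)).
Proof.
split.
- apply: I_zero => s.
  have L := lenard s k.+1; rewrite /rr /= in L.
  rewrite /chi' /= exprS.
  rewrite L; ring.
- pose W := Defs.Sub (Dy (Neg (chi' k.+1)))
     (Add (Defs.Sub (Dd (chi' k)) (Mul (rc 2) (Mul (U 0 1 0) (Dx (chi' k)))))
          (Mul (rc 2) (Mul (U 1 1 0) (chi' k)))).
  have HW : forall s, eval s W = 0.
    move=> s; have Z := zz_zero k.+1 s.
    rewrite zz0 /dd /rr /shy /= in Z.
    rewrite /W /chi' /= exprS.
    change (Dx (R k.+1)) with (Dtot (fun a b c => U a.+1 b c) (R k.+1)) in Z.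
    rewrite -[RHS](mulr0 (2 * 4 ^+ k)) -[in RHS]Z; ring.
  apply: (I_ext _ (I_add (I_neg (Dt_Dd (chi' k))) (I_zero HW))) => s.
  rewrite /W /=; ring.
Qed.

Lemma peq_Dtot sh p q : peq p q -> peq (Dtot sh p) (Dtot sh q).
Proof.
move=> H s; apply/eqP; rewrite -subr_eq0; apply/eqP.
have := Dtot_cong sh (p := Defs.Sub p q).
by apply => // s'; rewrite /= H subrr.
Qed.

Lemma R0_ext P P' Q Q' : peq P P' -> peq Q Q' -> is_R0_image P Q -> is_R0_image P' Q'.
Proof.
move=> HP HQ [H1 H2].
have e1 := peq_Dtot (fun a b c => U a.+1 b c) HP.
have e2 := peq_Dtot (fun a b c => U a.+1 b c) e1.
have e3 := peq_Dtot (fun a b c => U a.+1 b c) e2.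
have f1 := peq_Dtot (fun a b c => U a.+1 b c) HQ.
have g1 := peq_Dtot (fun a b c => U a b.+1 c) HQ.
have t1 := peq_Dtot (fun a b c => U a b c.+1) HP.
split.
- apply: (I_ext _ H1) => s /=; by rewrite e3 e1 f1 HP.
- apply: (I_ext _ H2) => s /=; by rewrite g1 t1 e1 HP.
Qed.

Lemma evalR1 s : eval s (R 1) = - s 1 0 0 / 2.
Proof.
rewrite RS /= /Sk /= !eval_dsumf big_ord1 big_ord0 /Tm R0 /=; field.
by [].
Qed.

Definition chi k := match k with 0 => U 1 0 0 | _ => chi' k end.
Lemma chi_eq k : peq (chi' k) (chi k).
Proof.
case: k => [|k] s //=.
by rewrite evalR1 expr0; field.
Qed.

Local Close Scope ring_scope.
Theorem proposition2 :
  exists chi : nat -> dpoly,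
    chi 0%N = U 1 0 0 /\
    forall k : nat, is_R0_image (chi k) (Neg (chi k.+1)).
Proof.
exists chi; split => // k.
apply: (R0_ext (chi_eq k) _ (chi'_R0 k)).
by move=> s.
Qed.
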